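(* Let $\mathbf{v}$ be quasi-definite with SMOP $(P_n)$, recurrence coefficients $(b_n),(a_n)$ and monic Jacobi matrix $J$; let $c,\widehat{\mathbf{v}}_0\in\mathbb{C}$ with $D_n:=\mathbf{v}_0P^{(1)}_{n-1}(c)+\widehat{\mathbf{v}}_0P_n(c)\ne0$ for all $n\ge0$, and $\widehat{\mathbf{v}}=(x-c)^{-1}\mathbf{v}+\widehat{\mathbf{v}}_0\boldsymbol\delta_c$ with SMOP $(\widehat P_n)$ and associated polynomials of the first kind $(\widehat P^{(1)}_n)$, whose monic Jacobi matrix is $\widehat J^{(1)}$. Let $\ell_n=-D_n/D_{n-1}$ ($n\ge1$) and $\beta_n=-\widehat P_{n+1}(c)/\widehat P_n(c)$ ($n\ge0$), so that $J-cI=UL$ with $U$ upper bidiagonal (diagonal $\beta_0,\beta_1,\dots$, superdiagonal $1$) and $L$ lower bidiagonal (diagonal $1$, subdiagonal $\ell_1,\ell_2,\dots$). Let $S_n=P_n+\frac{\mathbf{v}_0}{\widehat{\mathbf{v}}_0}P^{(1)}_{n-1}$ (the co-recursive polynomials of parameter $-\mathbf{v}_0/\widehat{\mathbf{v}}_0$ of $\mathbf{v}$), let $\mathbf{v}^\alpha$ be a quasi-definite functional whose SMOP is $(S_n)$, and let $J_\alpha$ be the monic Jacobi matrix of $(S_n)$. Then: (1) $(\widehat P^{(1)}_n)$ is the SMOP of $(x-c)\mathbf{v}^\alpha$, i.e. up to a nonzero factor $\widehat{\mathbf{v}}^{(1)}=(x-c)\mathbf{v}^\alpha$; (2) $J_\alpha-cI=\widehat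 L\widehat U$ and $\widehat J^{(1)}-cI=\widehat U\widehat L$, where $\widehat L$ is lower bidiagonal with diagonal $1$ and subdiagonal $\beta_1,\beta_2,\dots$, and $\widehat U$ is upper bidiagonal with diagonal $\ell_1,\ell_2,\dots$ and superdiagonal $1$.
   Context: Linear functionals on complex polynomials; $\langle(x-c)^{-1}\mathbf{v},p\rangle=\langle\mathbf{v},(p(x)-p(c))/(x-c)\rangle$, $\langle\boldsymbol\delta_c,p\rangle=p(c)$, $\langle(x-c)\mathbf{w},p\rangle=\langle\mathbf{w},(x-c)p\rangle$. Quasi-definite: all leading principal Hankel minors nonzero; SMOP = sequence of monic orthogonal polynomials with $xP_n=P_{n+1}+b_nP_n+a_nP_{n-1}$, $P_{-1}=0,P_0=1$, $a_n\neq0$; the hypothesis $D_n\ne0$ guarantees $\widehat{\mathbf{v}}$ is quasi-definite with $\widehat P_n=P_n+\ell_nP_{n-1}$ and $\widehat P_n(c)\ne0$. Associated polynomials of the first kind: monic, $xP^{(1)}_n=P^{(1)}_{n+1}+b_{n+1}P^{(1)}_n+a_{n+1}P^{(1)}_{n-1}$, $P^{(1)}_{-1}=0,P^{(1)}_0=1$. Monic Jacobi matrix: tridiagonal, diagonal $(b_0,b_1,\dots)$, superdiagonal $1$'s, subdiagonal $(a_1,a_2,\dots)$. *)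

(* Defs.v *)
From HB Require Import structures.
From mathcomp Require Import all_boot all_order all_algebra.
Set Implicit Arguments. Unset Strict Implicit. Unset Printing Implicit Defensive.
Import Order.TTheory GRing.Theory Num.Theory.
Local Open Scope ring_scope.

Section Defs.
Variable C : fieldType.

(* A linear functional on C[x] is represented by its moment sequence
   m n = <v, x^n>; its action on a polynomial is extended by linearity. *)
Definition functional := nat -> C.

Definition fapp (m : functional) (p : {poly C}) : C :=
  \sum_(i < size p) p`_i * m i.

Definition of_lin (f : {poly C} -> C) : functional := fun n => f 'X^n.

(* <(x-c)^{-1} v, p> = <v, (p(x) - p(c)) / (x - c)> *)
Definition fdivXc (c : C) (m : functional) : functional :=
  of_lin (fun p => fapp m ((p - (p.[c])%:P) %/ ('X - c%:P))).

Definition fdelta (c : C) : functional := of_lin (fun p => p.[c]).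

Definition fmulXc (c : C) (m : functional) : functional :=
  of_lin (fun p => fapp m (('X - c%:P) * p)).

Definition fadd (m1 m2 : functional) : functional := fun n => m1 n + m2 n.
Definition fscale (a : C) (m : functional) : functional := fun n => a * m n.

Definition quasi_definite (m : functional) : Prop :=
  forall n : nat, \det (\matrix_(i < n.+1, j < n.+1) m (i + j)%N) != 0.

Definition is_SMOP (m : functional) (P : nat -> {poly C}) : Prop :=
  (forall n, P n \is monic /\ size (P n) = n.+1) /\
  (forall n k, n != k -> fapp m (P n * P k) = 0) /\
  (forall n, fapp m (P n * P n) != 0).

Definition pm1 (P : nat -> {poly C}) (n : nat) : {poly C} :=
  if n is k.+1 then P k else 0.

Definition is_rec_coef (P : nat -> {poly C}) (b a : nat -> C) : Prop :=
  forall n, 'X * P n = P n.+1 + b n *: P n + a n *: pm1 P n.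

(* monic polynomials generated by x Q_n = Q_{n+1} + b_n Q_n + a_n Q_{n-1},
   Q_{-1} = 0, Q_0 = 1; recpair returns (Q_n, Q_{n-1}) *)
Fixpoint recpair (b a : nat -> C) (n : nat) : {poly C} * {poly C} :=
  match n with
  | 0 => (1, 0)
  | k.+1 => let (q, q') := recpair b a k in
            (('X - (b k)%:P) * q - a k *: q', q)
  end.

Definition rec_poly (b a : nat -> C) (n : nat) : {poly C} := (recpair b a n).1.

Definition assoc1 (b a : nat -> C) : nat -> {poly C} :=
  rec_poly (fun n => b n.+1) (fun n => a n.+1).

Definition imatrix := nat -> nat -> C.

Definition imx_id : imatrix := fun i j => (i == j)%:R.
Definition imx_subs (A : imatrix) (c : C) : imatrix :=
  fun i j => A i j - c * imx_id i j.

(* C = A B as infinite matrices, each entry being a finitely supported sum: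
   the partial sums are eventually equal to C i j *)
Definition imx_prod_eq (A B M : imatrix) : Prop :=
  forall i j, exists N, forall K, (N <= K)%N ->
    \sum_(k < K) A i k * B k j = M i j.

Definition jacobi (b a : nat -> C) : imatrix := fun i j =>
  if i == j then b i
  else if j == i.+1 then 1
  else if i == j.+1 then a i
  else 0.

Definition lower_bidiag1 (s : nat -> C) : imatrix := fun i j =>
  if i == j then 1 else if i == j.+1 then s i else 0.

Definition upper_bidiag1 (d : nat -> C) : imatrix := fun i j =>
  if i == j then d i.+1 else if j == i.+1 then 1 else 0.

End Defs.

(* Main.v *)
Require Import Defs.
From HB Require Import structures.
From mathcomp Require Import all_boot all_order all_algebra.
From mathcomp Require Import ring lra zify.
Set Implicit Arguments. Unset Strict Implicit. Unset Printing Implicit Defensive.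
Import Order.TTheory GRing.Theory Num.Theory.
Local Open Scope ring_scope.

Section Gen.
Variable C : fieldType.
Implicit Types (m : functional C) (p q : {poly C}).

Lemma fapp_widen m N p : (size p <= N)%N -> fapp m p = \sum_(i < N) p`_i * m i.
Proof.
move=> H; rewrite /fapp (big_ord_widen N (fun i => p`_i * m i) H) big_mkcond.
apply: eq_bigr => i _; case: ifP => // /negbT; rewrite -leqNgt => /(nth_default 0) ->.
by rewrite mul0r.
Qed.

Lemma fappD m p q : fapp m (p + q) = fapp m p + fapp m q.
Proof.
set N := maxn (size p) (size q).
rewrite !(@fapp_widen m N) ?leq_maxl ?leq_maxr ?size_polyD // -big_split.
by apply: eq_bigr => i _; rewrite coefD mulrDl.
Qed.

Lemma fappZ m a p : fapp m (a *: p) = a * fapp m p.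
Proof.
rewrite !(@fapp_widen m (size p)) ?size_scale_leq // mulr_sumr.
by apply: eq_bigr => i _; rewrite coefZ mulrA.
Qed.

Lemma fapp0 m : fapp m 0 = 0.
Proof. by rewrite /fapp size_poly0 big_ord0. Qed.

Lemma fappN m p : fapp m (- p) = - fapp m p.
Proof. by rewrite -scaleN1r fappZ mulN1r. Qed.

Lemma fappB m p q : fapp m (p - q) = fapp m p - fapp m q.
Proof. by rewrite fappD fappN. Qed.

Lemma fapp_of_lin (f : {poly C} -> C) p :
  (forall p q, f (p + q) = f p + f q) -> (forall a p, f (a *: p) = a * f p) ->
  fapp (of_lin f) p = f p.
Proof.
move=> fD fZ.
have f0 : f 0 = 0 by rewrite -(scale0r 0) fZ mul0r.
have fsum : forall n (F : 'I_n -> {poly C}), f (\sum_(i < n) F i) = \sum_(i < n) f (F i).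
  elim=> [|n IH] F; first by rewrite !big_ord0.
  by rewrite !big_ord_recr /= fD IH.
have -> : f p = f (\sum_(i < size p) p`_i *: 'X^i) by rewrite -poly_def coefK.
rewrite fsum /fapp /of_lin.
by apply: eq_bigr => i _; rewrite fZ.
Qed.

Lemma fapp_add m1 m2 p : fapp (fadd m1 m2) p = fapp m1 p + fapp m2 p.
Proof. by rewrite /fapp -big_split; apply: eq_bigr => i _; rewrite mulrDr. Qed.

Lemma fapp_scale a m p : fapp (fscale a m) p = a * fapp m p.
Proof. by rewrite /fapp mulr_sumr; apply: eq_bigr => i _; rewrite mulrCA. Qed.

Lemma fapp_mulXc c m p : fapp (fmulXc c m) p = fapp m (('X - c%:P) * p).
Proof.
apply: fapp_of_lin => [p1 q1|a p1]; first by rewrite mulrDr fappD.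
by rewrite -scalerAr fappZ.
Qed.

Lemma fapp_delta c p : fapp (fdelta c) p = p.[c].
Proof.
by apply: fapp_of_lin => [p1 q1|a p1]; rewrite ?hornerD ?hornerZ.
Qed.

Lemma fapp_divXc c m p :
  fapp (fdivXc c m) p = fapp m ((p - (p.[c])%:P) %/ ('X - c%:P)).
Proof.
apply: fapp_of_lin => [p1 q1|a p1].
  rewrite hornerD polyCD -fappD -divpD; congr (fapp _ (_ %/ _)); ring.
by rewrite hornerZ polyCM mul_polyC -scalerBr divpZl fappZ.
Qed.


Definition fam (Q : nat -> {poly C}) := forall n, Q n \is monic /\ size (Q n) = n.+1.

Lemma fam_coef Q n : fam Q -> (Q n)`_n = 1.
Proof.
move=> F; have [/monicP M S] := F n.
by move: M; rewrite /lead_coef S.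
Qed.

Lemma fam_neq0 Q n : fam Q -> Q n != 0.
Proof. by move=> F; rewrite -size_poly_eq0 (proj2 (F n)). Qed.

Lemma size_pm1 Q n : fam Q -> (size (pm1 Q n) <= n)%N.
Proof. by move=> F; case: n => [|n] /=; rewrite ?size_poly0 // (proj2 (F n)). Qed.

Lemma coef_pm1 Q n : fam Q -> (pm1 Q n)`_n = 0.
Proof. by move=> F; apply: nth_default; apply: size_pm1. Qed.

Lemma sub_lead Q p j : fam Q -> (size p <= j.+1)%N -> (size (p - p`_j *: Q j)%R <= j)%N.
Proof.
move=> F H; apply/leq_sizeP => i Hi.
rewrite coefB coefZ; case: (ltngtP i j) => [|Hij|->]; first by lia.
  have s1 : (size p <= i)%N by apply: leq_trans H Hij.
  have s2 : (size (Q j) <= i)%N by rewrite (proj2 (F j)).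
  by rewrite (nth_default 0 s1) (nth_default 0 s2) mulr0 subrr.
by rewrite (fam_coef j F) mulr1 subrr.
Qed.

Lemma smop_fam m Q : is_SMOP m Q -> fam Q.
Proof. by case. Qed.

Lemma orth_low m Q n p : is_SMOP m Q -> (size p <= n)%N -> fapp m (Q n * p) = 0.
Proof.
move=> HS; have F := smop_fam HS; have [_ [Ho _]] := HS.
suff: forall j, (j <= n)%N -> forall p, (size p <= j)%N -> fapp m (Q n * p) = 0.
  by move=> /(_ n (leqnn n)); apply.
elim=> [|j IH] Hj p0 Hp.
  by move: Hp; rewrite leqn0 size_poly_eq0 => /eqP ->; rewrite mulr0 fapp0.
have -> : p0 = (p0 - p0`_j *: Q j) + p0`_j *: Q j by rewrite subrK.
rewrite mulrDr fappD IH ?sub_lead //; last by lia.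
rewrite -scalerAr fappZ Ho ?mulr0 ?addr0 //; apply/eqP; lia.
Qed.

Lemma orth_lead m Q n p : is_SMOP m Q -> (size p <= n.+1)%N ->
  fapp m (Q n * p) = p`_n * fapp m (Q n * Q n).
Proof.
move=> HS Hp; have F := smop_fam HS.
have -> : p = (p - p`_n *: Q n) + p`_n *: Q n by rewrite subrK.
rewrite mulrDr fappD orth_low ?sub_lead // add0r -scalerAr fappZ.
by rewrite coefD coefB coefZ (fam_coef n F) mulr1 subrr add0r.
Qed.

Lemma orth_zero m Q n (r : {poly C}) : is_SMOP m Q -> (size r <= n)%N ->
  (forall q, (size q <= n)%N -> fapp m (r * q) = 0) -> r = 0.
Proof.
move=> HS Hr Ho; have F := smop_fam HS; have [_ [_ Hn]] := HS.
apply/eqP; apply/negPn/negP => r0.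
set d := (size r).-1.
have Sd : size r = d.+1 by rewrite /d prednK // lt0n size_poly_eq0.
have := @orth_lead m Q d r HS (eq_leq Sd).
rewrite mulrC Ho; last by rewrite (proj2 (F d)) -Sd.
move/esym/eqP; rewrite mulf_eq0 (negPf (Hn d)) orbF.
have -> : r`_d = lead_coef r by rewrite /lead_coef Sd.
by rewrite lead_coef_eq0 (negPf r0).
Qed.

Lemma smop_unique m Q n (T : {poly C}) : is_SMOP m Q -> size T = n.+1 -> T`_n = 1 ->
  (forall q, (size q <= n)%N -> fapp m (T * q) = 0) -> T = Q n.
Proof.
move=> HS ST T1 Ho; have F := smop_fam HS.
apply/eqP; rewrite -subr_eq0; apply/eqP; apply: (@orth_zero m Q n) => //.
  apply/leq_sizeP => j Hj; rewrite coefB; case: (ltngtP j n) => [|Hnj|->]; first by lia.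
    by rewrite !nth_default ?subrr ?ST ?(proj2 (F n)).
  by rewrite T1 (fam_coef n F) subrr.
by move=> q Hq; rewrite mulrBl fappB Ho // orth_low // subrr.
Qed.

Lemma rec_unique Q b a n B A : fam Q -> is_rec_coef Q b a ->
  'X * Q n = Q n.+1 + B *: Q n + A *: pm1 Q n -> B = b n /\ ((0 < n)%N -> A = a n).
Proof.
move=> F R E; have E0 := R n; rewrite E in E0.
have E1 : (B - b n) *: Q n + (A - a n) *: pm1 Q n = 0.
  rewrite !scalerBl; move/eqP: E0; rewrite -subr_eq0 => /eqP <-; ring.
have HB : B = b n.
  have := congr1 (fun p => p`_n) E1; rewrite /= coefD !coefZ (fam_coef n F) (coef_pm1 n F).
  by rewrite mulr1 mulr0 addr0 coef0 => /eqP; rewrite subr_eq0 => /eqP.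
split=> // n0; move: E1; rewrite HB subrr scale0r add0r.
case: n n0 {E E0 HB} => // k _ /= /eqP; rewrite scaler_eq0 (negPf (fam_neq0 _ F)) orbF.
by rewrite subr_eq0 => /eqP.
Qed.

Lemma recpair_snd (b a : nat -> C) k : (recpair b a k).2 = pm1 (rec_poly b a) k.
Proof. by case: k => [|k] //=; rewrite /rec_poly; case: (recpair b a k). Qed.

Lemma rec_polyS (b a : nat -> C) k : rec_poly b a k.+1 =
  ('X - (b k)%:P) * rec_poly b a k - a k *: pm1 (rec_poly b a) k.
Proof.
rewrite -recpair_snd /rec_poly /=; by case: (recpair b a k).
Qed.

Lemma rec_poly0 (b a : nat -> C) : rec_poly b a 0 = 1. Proof. by []. Qed.

Lemma rec_fam (b a : nat -> C) : fam (rec_poly b a).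
Proof.
suff H : forall n, size (rec_poly b a n) = n.+1 /\ (rec_poly b a n)`_n = 1 /\
   (size (pm1 (rec_poly b a) n) <= n)%N.
  move=> n; have [S [Cf _]] := H n; split=> //; apply/monicP; by rewrite /lead_coef S.
elim=> [|n [S [Cf Sp]]].
  by rewrite rec_poly0 size_poly1 coefC /= size_poly0.
have Hm : size (('X - (b n)%:P) * rec_poly b a n) = n.+2.
  rewrite size_mul ?S ?size_XsubC //; last by rewrite -size_poly_eq0 S.
  by rewrite -size_poly_eq0 size_XsubC.
have Hs : (size (a n *: pm1 (rec_poly b a) n) < n.+2)%N.
  by apply: leq_ltn_trans (size_scale_leq _ _) _; apply: leq_trans Sp _.
rewrite rec_polyS /=; split; last split; last by rewrite S.
  by rewrite size_polyDl ?size_polyN Hm.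
rewrite coefB mulrBl coefB coefXM coefCM /= Cf (nth_default 0 (_ : size _ <= n.+1)%N) ?S //.
by rewrite mulr0 subr0 (nth_default 0 (_ : size _ <= n.+1)%N) ?subr0.
Qed.

End Gen.

Section Aux.
Variable C : fieldType.
Implicit Types (m : functional C) (p q : {poly C}).

Lemma fam0 (Q : nat -> {poly C}) : fam Q -> Q 0 = 1.
Proof.
move=> F; have [M S] := F 0.
by rewrite [Q 0]size1_polyC ?S // (fam_coef 0 F).
Qed.

Lemma fapp1 m : fapp m 1 = m 0%N.
Proof. by rewrite /fapp size_poly1 big_ord1 coef1 mul1r. Qed.

Lemma XsubC_neq0 (c : C) : ('X - c%:P) != 0.
Proof. by rewrite -size_poly_eq0 size_XsubC. Qed.

Lemma dec_XsubC (c : C) q :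
  q = ('X - c%:P) * (q %/ ('X - c%:P)) + (q.[c])%:P /\
  size (q %/ ('X - c%:P)) = (size q).-1.
Proof.
split; first by rewrite {1}(divp_eq q ('X - c%:P)) modp_XsubC mulrC.
by rewrite size_divp ?XsubC_neq0 // size_XsubC subn1.
Qed.

Lemma coefXsubCM (c : C) q i : (('X - c%:P) * q)`_i.+1 = q`_i - c * q`_i.+1.
Proof. by rewrite mulrBl coefB coefXM coefCM. Qed.

Lemma Kp_XsubC (c : C) q : (('X - c%:P) * q - ((('X - c%:P) * q).[c])%:P) %/ ('X - c%:P) = q.
Proof. by rewrite hornerM hornerXsubC subrr mul0r subr0 mulKp ?XsubC_neq0. Qed.

End Aux.

Section Mat.
Variable C : fieldType.

Lemma sum_trunc (F : nat -> C) N K : (N <= K)%N -> (forall k, (N <= k)%N -> F k = 0) ->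
  \sum_(k < K) F k = \sum_(k < N) F k.
Proof.
move=> H HF; rewrite -!(big_mkord xpredT) (big_cat_nat (leq0n N) H) /=.
rewrite [X in _ + X]big1_seq ?addr0 // => i /andP[_]; rewrite mem_index_iota => /andP[Hi _].
exact: HF.
Qed.

Lemma sum_lower (s X : nat -> C) i K : (i < K)%N ->
  \sum_(k < K) lower_bidiag1 s i k * X k = X i + (if i is i'.+1 then s i * X i' else 0).
Proof.
move=> H; rewrite (@sum_trunc (fun k => lower_bidiag1 s i k * X k) i.+1) //; last first.
  move=> k Hk; rewrite /lower_bidiag1 !ifF ?mul0r //; apply/eqP; lia.
rewrite big_ord_recr /= {2}/lower_bidiag1 eqxx mul1r addrC; congr (_ + _).
case: i {H} => [|j]; first by rewrite big_ord0.
rewrite big_ord_recr /= big1 ?add0r => [|k _]; last first.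
  rewrite /lower_bidiag1 !ifF ?mul0r //; apply/eqP; have := ltn_ord k; lia.
rewrite /lower_bidiag1 ifF ?eqxx //; apply/eqP; lia.
Qed.

Lemma sum_upper (d X : nat -> C) i K : (i.+1 < K)%N ->
  \sum_(k < K) upper_bidiag1 d i k * X k = d i.+1 * X i + X i.+1.
Proof.
move=> H; rewrite (@sum_trunc (fun k => upper_bidiag1 d i k * X k) i.+2) //; last first.
  move=> k Hk; rewrite /upper_bidiag1 !ifF ?mul0r //; apply/eqP; lia.
rewrite !big_ord_recr /= big1 ?add0r => [|k _]; last first.
  rewrite /upper_bidiag1 !ifF ?mul0r //; apply/eqP; have := ltn_ord k; lia.
rewrite /upper_bidiag1 eqxx ifF ?eqxx ?mul1r //; apply/eqP; lia.
Qed.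

Lemma nat_split (i j : nat) : (exists d, j = (i + d)%N) \/ (exists d, i = (j + d.+1)%N).
Proof.
case: (leqP i j) => H; [left; exists (j - i)%N | right; exists (i - j).-1]; lia.
Qed.

End Mat.

Section Main.
Variable C : fieldType.
Variables (v : functional C) (P : nat -> {poly C}) (b a : nat -> C) (c vh0 : C)
  (Ph : nat -> {poly C}) (bh ah : nat -> C)
  (valpha : functional C) (balpha aalpha : nat -> C).
Hypotheses (HSv : is_SMOP v P) (Rv : is_rec_coef P b a).
Definition P1 := assoc1 b a.
Definition D := fun n => v 0%N * (pm1 P1 n).[c] + vh0 * (P n).[c].
Hypothesis HD : forall n, D n != 0.
Definition vh := fadd (fdivXc c v) (fscale vh0 (fdelta c)).
Hypotheses (HSh : is_SMOP vh Ph) (Rh : is_rec_coef Ph bh ah).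
Definition Ph1 := assoc1 bh ah.
Definition ell := fun n => - D n / D n.-1.
Definition beta := fun n => - (Ph n.+1).[c] / (Ph n).[c].
Definition S := fun n => P n + (v 0%N / vh0) *: pm1 P1 n.
Hypotheses (HSa : is_SMOP valpha S) (Ra : is_rec_coef S balpha aalpha).

Definition Kp p := (p - (p.[c])%:P) %/ ('X - c%:P).

Lemma Fv : fam P. Proof. exact: smop_fam HSv. Qed.
Lemma Fh : fam Ph. Proof. exact: smop_fam HSh. Qed.
Lemma Fa : fam S. Proof. exact: smop_fam HSa. Qed.

Lemma vh_app p : fapp vh p = fapp v (Kp p) + vh0 * p.[c].
Proof. by rewrite /vh fapp_add fapp_divXc fapp_scale fapp_delta. Qed.

Lemma vh_XsubC q : fapp vh (('X - c%:P) * q) = fapp v q.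
Proof. by rewrite vh_app /Kp Kp_XsubC hornerM hornerXsubC subrr mul0r mulr0 addr0. Qed.

Lemma KpD p q : Kp (p + q) = Kp p + Kp q.
Proof. rewrite /Kp hornerD polyCD -divpD; congr (_ %/ _); ring. Qed.

Lemma KpZ x p : Kp (x *: p) = x *: Kp p.
Proof. by rewrite /Kp hornerZ polyCM mul_polyC -scalerBr divpZl. Qed.

Lemma KpX p : Kp ('X * p) = p + c *: Kp p.
Proof.
have -> : 'X * p = ('X - c%:P) * p + c *: p by rewrite -mul_polyC; ring.
by rewrite KpD KpZ /Kp Kp_XsubC.
Qed.

Lemma Kp0 : Kp 0 = 0. Proof. by rewrite /Kp horner0 subrr div0p. Qed.

Lemma KpS n : fapp v (Kp (P n.+1)) =
  fapp v (P n) + (c - b n) * fapp v (Kp (P n)) - a n * fapp v (Kp (pm1 P n)).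
Proof.
have -> : P n.+1 = 'X * P n + (- b n) *: P n + (- a n) *: pm1 P n.
  by rewrite Rv !scaleNr; ring.
by rewrite !KpD !KpZ KpX !fappD !fappZ; ring.
Qed.

Lemma fappP n : fapp v (P n) = if n is 0 then v 0%N else 0.
Proof.
case: n => [|n]; first by rewrite (fam0 Fv) fapp1.
by rewrite -[P _]mulr1 (orth_low HSv) // size_poly1.
Qed.

Lemma P1S k : P1 k.+1 = ('X - (b k.+1)%:P) * P1 k - a k.+1 *: pm1 P1 k.
Proof. by rewrite /P1 /assoc1 rec_polyS. Qed.

Lemma KpP n : fapp v (Kp (P n)) = v 0%N * (pm1 P1 n).[c].
Proof.
suff H : forall k, fapp v (Kp (P k)) = v 0%N * (pm1 P1 k).[c] /\
                   fapp v (Kp (P k.+1)) = v 0%N * (pm1 P1 k.+1).[c] by case: (H n).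
elim=> [|k [IH1 IH2]].
  have E0 : fapp v (Kp (P 0)) = 0 by rewrite (fam0 Fv) /Kp hornerC subrr div0p fapp0.
  split; first by rewrite E0 /= horner0 mulr0.
  by rewrite KpS E0 /= Kp0 fapp0 fappP /P1 /assoc1 rec_poly0 hornerC; ring.
split=> //; rewrite KpS fappP IH2 /= IH1 /=.
by rewrite P1S hornerD hornerN hornerZ hornerM hornerXsubC; ring.
Qed.

Lemma vhP n : fapp vh (P n) = D n.
Proof. by rewrite vh_app KpP. Qed.

Lemma Ph_c n : (Ph n).[c] != 0.
Proof.
case: n => [|k]; first by rewrite (fam0 Fh) hornerC oner_eq0.
apply/negP => /eqP Hc.
have [E ST] := dec_XsubC c (Ph k.+1).
set T := Ph k.+1 %/ _ in E ST.
rewrite Hc addr0 in E.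
have Sz : size T = k.+1 by rewrite ST (proj2 (Fh k.+1)).
have Tk : T`_k = 1.
  have := fam_coef k.+1 Fh; rewrite E coefXsubCM (nth_default 0 (_ : size T <= k.+1)%N) ?Sz //.
  by rewrite mulr0 subr0.
have H1 := orth_lead HSv (eq_leq Sz).
have : fapp v (P k * T) = 0.
  rewrite -vh_XsubC mulrCA -E mulrC (orth_low HSh) //.
  by rewrite (proj2 (Fv k)).
rewrite H1 Tk mul1r; apply/eqP; have [_ [_ ->]] := HSv; done.
Qed.


Lemma vh0_neq0 : vh0 != 0.
Proof.
have := HD 0; rewrite /D /= horner0 mulr0 add0r (fam0 Fv) hornerC mulr1; done.
Qed.

Lemma G1 n : Ph n = P n + ell n *: pm1 P n.
Proof.
case: n => [|k]; first by rewrite /= scaler0 addr0 (fam0 Fv) (fam0 Fh).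
set n := k.+1.
have Sz : size (P n + ell n *: pm1 P n) = n.+1.
  rewrite size_polyDl (proj2 (Fv n)) //.
  by apply: leq_ltn_trans (size_scale_leq _ _) _; rewrite /= (proj2 (Fv k)).
symmetry; apply: (smop_unique HSh Sz).
  by rewrite coefD coefZ (fam_coef n Fv) (coef_pm1 n Fv) mulr0 addr0.
move=> q Hq; have [E ST] := dec_XsubC c q.
set r := q %/ _ in E ST.
have Sr : (size r <= k)%N by rewrite ST; move: Hq; rewrite /n; case: (size q) => //= ? ; lia.
rewrite E mulrDr mulrCA fappD vh_XsubC (mulrC _ (q.[c])%:P) mul_polyC fappZ.
rewrite mulrDl -scalerAl !fappD !fappZ /n /= !vhP.
rewrite (orth_low HSv Sr) (orth_low HSv (_ : size r <= k.+1)%N); last by lia.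
rewrite /ell /= mulr0 addr0 add0r.
have Hk := HD k; field; done.
Qed.


Lemma G2 n : ('X - c%:P) * P n = Ph n.+1 + beta n *: Ph n.
Proof.
set R := Ph n.+1 + beta n *: Ph n.
have Rc : R.[c] = 0.
  rewrite /R hornerD hornerZ /beta; have := Ph_c n => H; field; done.
have [E ST] := dec_XsubC c R.
set T := R %/ _ in E ST; rewrite Rc addr0 in E.
have SR : size R = n.+2.
  rewrite size_polyDl (proj2 (Fh n.+1)) //.
  by apply: leq_ltn_trans (size_scale_leq _ _) _; rewrite (proj2 (Fh n)).
have Sz : size T = n.+1 by rewrite ST SR.
suff -> : P n = T by rewrite -E.
symmetry; apply: (smop_unique HSv Sz).
  have : R`_n.+1 = 1.
    by rewrite /R coefD coefZ (fam_coef n.+1 Fh) (nth_default 0 (_ : size (Ph n) <= n.+1)%N) ?(proj2 (Fh n)) // mulr0 addr0.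
  by rewrite E coefXsubCM (nth_default 0 (_ : size T <= n.+1)%N) ?Sz // mulr0 subr0.
move=> q Hq; rewrite -vh_XsubC mulrA -E /R mulrDl -scalerAl fappD fappZ.
rewrite !(orth_low HSh) ?mulr0 ?addr0 //; lia.
Qed.

Lemma RP n : b n = c + ell n.+1 + beta n /\ ((0 < n)%N -> a n = beta n * ell n).
Proof.
have E : 'X * P n = P n.+1 + (c + ell n.+1 + beta n) *: P n + (beta n * ell n) *: pm1 P n.
  have -> : 'X * P n = ('X - c%:P) * P n + c%:P * P n by ring.
  rewrite G2 !G1 /= -!mul_polyC !polyCD !polyCM; ring.
have [H1 H2] := rec_unique Fv Rv E.
by split=> // /H2.
Qed.

Lemma RPh n : (0 < n)%N -> bh n = c + beta n + ell n /\ ah n = ell n * beta n.-1.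
Proof.
case: n => // k _.
have E : 'X * Ph k.+1 = Ph k.+2 + (c + beta k.+1 + ell k.+1) *: Ph k.+1 +
     (ell k.+1 * beta k) *: pm1 Ph k.+1.
  have -> : 'X * Ph k.+1 = ('X - c%:P) * Ph k.+1 + c%:P * Ph k.+1 by ring.
  have -> : ('X - c%:P) * Ph k.+1 = ('X - c%:P) * P k.+1 + ell k.+1 *: (('X - c%:P) * P k).
    by rewrite G1 /= mulrDr scalerAr.
  rewrite !G2 /= -!mul_polyC !polyCD !polyCM; ring.
have [H1 H2] := rec_unique Fh Rh E.
by split; [rewrite H1 | rewrite H2].
Qed.

Lemma beta0 : beta 0 = v 0%N / vh0.
Proof.
have P0 := fam0 Fv; have Ph0 := fam0 Fh.
have P1e : P 1 = 'X - (b 0)%:P.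
  have := Rv 0; rewrite /= P0 scaler0 addr0 mulr1 => ->; rewrite -mul_polyC; ring.
have := vh0_neq0 => H0.
rewrite /beta Ph0 G1 /= P1e P0 /ell /D /= P1e P0 /P1 /assoc1 rec_poly0 !hornerE divr1.
field; done.
Qed.


Definition kap := v 0%N / vh0.

Lemma SR n : 'X * S n = S n.+1 + (if n is 0 then b 0 - kap else b n) *: S n + a n *: pm1 S n.
Proof.
have P0 := fam0 Fv.
case: n => [|k].
  rewrite /S /= P0 scaler0 addr0 /P1 /assoc1 rec_poly0.
  have := Rv 0; rewrite /= P0 scaler0 addr0 mulr1 => ->.
  rewrite -/kap -?mul_polyC ?polyCD ?polyCN ?polyCB ?polyCM; ring.
rewrite /S /= P1S -/kap.
have := Rv k.+1; rewrite /= => E.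
rewrite -[P k + _]/(P k + kap *: pm1 P1 k).
rewrite mulrDr E -?mul_polyC ?polyCD ?polyCN ?polyCB ?polyCM; ring.
Qed.

Lemma balpha_eq n : balpha n = if n is 0 then c + ell 1 else c + ell n.+1 + beta n.
Proof.
have [H1 _] := rec_unique Fa Ra (SR n).
rewrite -H1; clear H1; case: n => [|k]; first by rewrite /kap -beta0 (proj1 (RP 0)); ring.
by rewrite (proj1 (RP k.+1)).
Qed.

Lemma aalpha_eq n : (0 < n)%N -> aalpha n = beta n * ell n.
Proof.
move=> n0; have [_ H2] := rec_unique Fa Ra (SR n).
by rewrite -H2 // (proj2 (RP n)).
Qed.

Definition Q n := S n.+1 + ell n.+1 *: S n.

Lemma keyS k : ('X - c%:P) * S k = Q k + beta k *: pm1 Q k.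
Proof.
have := Ra k; rewrite balpha_eq /Q => E.
case: k E => [|k] E.
  rewrite /= scaler0 addr0 mulrBl E /= scaler0 addr0 -?mul_polyC ?polyCD ?polyCN ?polyCB ?polyCM; ring.
rewrite /= mulrBl E aalpha_eq //= -?mul_polyC ?polyCD ?polyCN ?polyCB ?polyCM; ring.
Qed.

Lemma QX k : ('X - c%:P) * Q k = Q k.+1 + beta k.+1 *: Q k + ell k.+1 *: (Q k + beta k *: pm1 Q k).
Proof.
rewrite {1}/Q mulrDr -scalerAr !keyS //.
Qed.

Lemma Ph1S k : Ph1 k.+1 = ('X - (bh k.+1)%:P) * Ph1 k - ah k.+1 *: pm1 Ph1 k.
Proof. by rewrite /Ph1 /assoc1 rec_polyS. Qed.

Lemma Ph1_eq n : ('X - c%:P) * Ph1 n = Q n.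
Proof.
suff H : forall k, ('X - c%:P) * Ph1 k = Q k /\ ('X - c%:P) * pm1 Ph1 k = pm1 Q k
  by case: (H n).
elim=> [|k [IH1 IH2]].
  split; last by rewrite /= mulr0.
  rewrite /Ph1 /assoc1 rec_poly0 mulr1.
  have := keyS 0; rewrite (fam0 Fa) mulr1 /= scaler0 addr0 => ->; done.
split; last by rewrite /= IH1.
have [Hb Ha] := RPh (isT : (0 < k.+1)%N).
rewrite Ph1S mulrBr -scalerAr mulrCA IH1 IH2.
rewrite (_ : ('X - (bh k.+1)%:P) * Q k = ('X - c%:P) * Q k + (c - bh k.+1)%:P * Q k);
  last by rewrite polyCB; ring.
rewrite QX Hb Ha.
rewrite -?mul_polyC ?(polyCD, polyCN, polyCB, polyCM). 
ring.
Qed.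


Lemma Fp1 : fam Ph1.
Proof. exact: rec_fam. Qed.

Lemma claim1 : is_SMOP (fmulXc c valpha) Ph1.
Proof.
have H : forall n k, (k < n)%N -> fapp valpha (('X - c%:P) * (Ph1 n * Ph1 k)) = 0.
  move=> n k kn; rewrite mulrA Ph1_eq /Q mulrDl -scalerAl fappD fappZ.
  by rewrite !(orth_low HSa) ?mulr0 ?addr0 // (proj2 (Fp1 k)); lia.
split; first exact: Fp1.
split.
  move=> n k nk; rewrite fapp_mulXc.
  case: (ltngtP k n) => [/H //|kn|kn]; last by move: nk; rewrite kn eqxx.
  by rewrite [Ph1 n * _]mulrC H.
move=> n; rewrite fapp_mulXc mulrA Ph1_eq /Q mulrDl -scalerAl fappD fappZ.
rewrite (orth_low HSa) ?(proj2 (Fp1 n)) // add0r.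
rewrite (orth_lead HSa) ?(proj2 (Fp1 n)) // (fam_coef n Fp1) mul1r.
have [_ [_ Hn]] := HSa.
rewrite mulf_neq0 // /ell /= mulf_neq0 ?oppr_eq0 ?invr_eq0 //.
Qed.


Lemma prodLU : imx_prod_eq (lower_bidiag1 beta) (upper_bidiag1 ell)
  (imx_subs (jacobi balpha aalpha) c).
Proof.
move=> i j; exists i.+1 => K HK; rewrite (@sum_lower _ beta (fun k => upper_bidiag1 ell k j) i K HK).
rewrite /upper_bidiag1 /imx_subs /jacobi /imx_id balpha_eq.
case: (nat_split i j) => [[d ->]|[d ->]].
  case: i HK => [|i] HK /=; repeat (case: eqP => ?; try lia).
  all: rewrite ?aalpha_eq /=; try lia; try ring.
rewrite addnS /=; repeat (case: eqP => ?; try lia).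
all: rewrite ?aalpha_eq /=; try lia; try ring.
Qed.

Lemma prodUL : imx_prod_eq (upper_bidiag1 ell) (lower_bidiag1 beta)
  (imx_subs (jacobi (fun n => bh n.+1) (fun n => ah n.+1)) c).
Proof.
move=> i j; exists i.+2 => K HK.
rewrite (@sum_upper _ ell (fun k => lower_bidiag1 beta k j) i K HK).
have [Hb Ha] := RPh (ltn0Sn i).
rewrite /lower_bidiag1 /imx_subs /jacobi /imx_id /= Hb Ha /=.
case: (nat_split i j) => [[d ->]|[d ->]]; repeat (case: eqP => ?; try lia).
all: rewrite /= ?mulr1 ?mulr0; ring.
Qed.

End Main.

Theorem mainTheorem14 (C : numClosedFieldType)
  (v : functional C) (P : nat -> {poly C}) (b a : nat -> C)
  (c vh0 : C)
  (Ph : nat -> {poly C}) (bh ah : nat -> C)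
  (valpha : functional C) (balpha aalpha : nat -> C) :
  quasi_definite v -> is_SMOP v P -> is_rec_coef P b a ->
  let P1 := assoc1 b a in
  let D := fun n => v 0%N * (pm1 P1 n).[c] + vh0 * (P n).[c] in
  (forall n, D n != 0) ->
  let vh := fadd (fdivXc c v) (fscale vh0 (fdelta c)) in
  is_SMOP vh Ph -> is_rec_coef Ph bh ah ->
  let Ph1 := assoc1 bh ah in
  let Jh1 := jacobi (fun n => bh n.+1) (fun n => ah n.+1) in
  let ell := fun n => - D n / D n.-1 in
  let beta := fun n => - (Ph n.+1).[c] / (Ph n).[c] in
  let S := fun n => P n + (v 0%N / vh0) *: pm1 P1 n in
  quasi_definite valpha -> is_SMOP valpha S -> is_rec_coef S balpha aalpha ->
  let Jalpha := jacobi balpha aalpha in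
  let Lh := lower_bidiag1 beta in
  let Uh := upper_bidiag1 ell in
  is_SMOP (fmulXc c valpha) Ph1 /\
  imx_prod_eq Lh Uh (imx_subs Jalpha c) /\
  imx_prod_eq Uh Lh (imx_subs Jh1 c).
Proof.
move=> _ HSv Rv P1 D HD vh HSh Rh Ph1 Jh1 ell beta S _ HSa Ra Jalpha Lh Uh.
split; [|split].
- exact: (claim1 HSv Rv HD HSh Rh HSa Ra).
- exact: (prodLU HSv Rv HD HSh HSa Ra).
- exact: (prodUL HSv Rv HD HSh Rh).
Qed.
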